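(* Let $\Gamma$ be a metrized graph that is a tree with $v$ vertices. Then $$W(\Gamma)=\frac{1}{4} \Big[ v \cdot \ell(\Gamma) + \sum_{p, q \in V(\Gamma)} \mathrm{val}(q)\, r(p,q) \Big].$$ In particular, if each edge length is equal to $1$, $$W(\Gamma)=\frac{1}{4} \Big[ v(v-1)+ \sum_{p, q \in V(\Gamma)} \mathrm{val}(q)\, r(p,q) \Big].$$
   Context: A metrized graph is a finite connected graph each of whose edges is identified with a closed segment of positive length; its vertex set $V(\Gamma)$ is a finite nonempty set containing every point of valence $\neq 2$, and $v=\#V(\Gamma)$. $\mathrm{val}(q)$ is the valence of $q$ (number of directions emanating from $q$). $\ell(\Gamma)$ is the total length. $r(p,q)$ is the effective resistance between $p$ and $q$ (edges as resistors of resistance equal to length); on a tree it equals the path distance $d(p,q)$. The Wiener index is $W(\Gamma)=\frac12\sum_{p,q\in V(\Gamma)}d(p,q)$. *)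

(* Defs.v *)
(* A metrized tree is modelled combinatorially: a finite
   vertex type T (= V(Gamma)), an edge set E of 2-element subsets of T, and
   positive edge lengths len : {set T} -> R. *)
From Stdlib Require Import ClassicalEpsilon.
From mathcomp Require Import all_boot all_order all_algebra.
Set Implicit Arguments. Unset Strict Implicit. Unset Printing Implicit Defensive.
Import Order.TTheory GRing.Theory Num.Theory.
Local Open Scope ring_scope.

Section MetrizedGraph.
Variables (R : realFieldType) (T : finType) (E : {set {set T}}) (len : {set T} -> R).

Definition adj : rel T := fun p q => (p != q) && ([set p; q] \in E).

Definition valence (q : T) : nat := #|[set x | adj q x]|.

Definition total_length : R := \sum_(f in E) len f.

Definition walk (p q : T) (s : seq T) : bool := path adj p s && (last p s == q).

Definition walk_len (p : T) (s : seq T) : R :=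
  \sum_(i < size s) len [set nth p (p :: s) i; nth p s i].

(* path (shortest-walk) distance; walks with fewer than #|T| steps suffice,
   the default value total_length is only an upper bound never attained
   for connected graphs. *)
Definition dist (p q : T) : R :=
  \big[Num.min/total_length]_(k < #|T|)
     \big[Num.min/total_length]_(t : k.-tuple T | walk p q t) walk_len p t.

Definition connected_graph : Prop := forall p q : T, connect adj p q.

Definition acyclic : Prop :=
  forall (p : T) (s : seq T), uniq (p :: s) -> (2 <= size s)%N -> ~~ cycle adj (p :: s).

Definition is_tree : Prop := connected_graph /\ acyclic.

Definition wiener : R := (\sum_(p : T) \sum_(q : T) dist p q) / 2.

(* weighted Laplacian (conductance 1/len on each edge) applied to a potential *)
Definition laplacian (x : T -> R) (u : T) : R :=
  \sum_(w | adj u w) (x u - x w) / len [set u; w].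

(* effective resistance: inject unit current at p, extract it at q; r(p,q)
   is the potential difference x p - x q of any solution x of L x = 1_p - 1_q
   (solutions exist and are unique up to constants on a connected graph). *)
Definition resistance (p q : T) : R :=
  let x := epsilon (inhabits (fun _ : T => 0 : R))
     (fun x : T -> R => forall u : T,
        laplacian x u = (u == p)%:R - (u == q)%:R) in
  x p - x q.
End MetrizedGraph.

(* Main.v *)
Require Import Defs.
From Stdlib Require Import ClassicalEpsilon.
From mathcomp Require Import all_boot all_order all_algebra ring lra.
Set Implicit Arguments. Unset Strict Implicit. Unset Printing Implicit Defensive.
Import Order.TTheory GRing.Theory Num.Theory.
Local Open Scope ring_scope.

Section Tree.
Variables (R : realFieldType) (T : finType) (E : {set {set T}}) (len : {set T} -> R).
Hypothesis hE2 : forall f, f \in E -> #|f| = 2.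
Hypothesis hlen : forall f, f \in E -> 0 < len f.
Hypothesis htree : is_tree E.

Notation adj := (adj E).

Lemma adjC : symmetric adj.
Proof. by move=> x y; rewrite /Defs.adj eq_sym setUC. Qed.

Lemma adj_irr x : adj x x = false.
Proof. by rewrite /Defs.adj eqxx. Qed.

Lemma adj_len x y : adj x y -> 0 < len [set x; y].
Proof. by case/andP=> _ /hlen. Qed.

Lemma UP x s t : path adj x s -> path adj x t -> uniq (x :: s) -> uniq (x :: t) ->
  last x s = last x t -> s = t.
Proof.
elim: s x t => [|y s IH] x t.
  case: t => [//|z t] _ _ _ /= /andP[xnin _] hl.
  by exfalso; move: xnin; rewrite hl /= mem_last.
move=> /= /andP[axy ps] pt /andP[xnin us] ut hl.
have [yt|ynt] := boolP (y \in t).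
  case/splitPr: yt pt ut hl => t1 t2.
  case: t1 => [|z t1].
    move=> /= /andP[_ pt2] /andP[_ ut2] hl.
    by rewrite (IH y t2).
  move=> pt ut hl; exfalso.
  have := htree.2 x (rcons (z :: t1) y).
  have -> : uniq (x :: rcons (z :: t1) y).
    have ut' : uniq (x :: (z :: t1) ++ y :: t2) := ut.
    by move: ut'; rewrite -cat_rcons -cat_cons cat_uniq; case/andP.
  rewrite size_rcons /= ltnS ltnS => /(_ isT isT); apply/negP/negPn.
  rewrite /= rcons_path; move: pt; rewrite -cat_rcons cat_path => /andP[].
  by rewrite /= => /andP[-> ->] _; rewrite last_rcons adjC axy.
have hs : s = x :: t.
  apply: (IH y) => //=.
  - by rewrite adjC axy.
  - move: xnin; rewrite inE negb_or => /andP[xy _].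
    by rewrite inE negb_or eq_sym xy ynt.
by move: xnin; rewrite hs !inE eqxx orbT.
Qed.

Definition isp p q s := [&& path adj p s, last p s == q & uniq (p :: s)].

Lemma isp_ex p q : exists s, isp p q s.
Proof.
have /connectP[s ps ->] := htree.1 p q.
case: (shortenP ps) => s' ps' us' _.
by exists s'; rewrite /isp ps' us' eqxx.
Qed.

Definition sp p q := xchoose (isp_ex p q).

Lemma spP p q : isp p q (sp p q).
Proof. exact: xchooseP. Qed.

Lemma sp_path p q : path adj p (sp p q).
Proof. by case/and3P: (spP p q). Qed.
Lemma sp_last p q : last p (sp p q) = q.
Proof. by case/and3P: (spP p q) => _ /eqP. Qed.
Lemma sp_uniq p q : uniq (p :: sp p q).
Proof. by case/and3P: (spP p q). Qed.

Lemma sp_eq p q s : isp p q s -> sp p q = s.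
Proof.
case/and3P=> ps /eqP ls us; apply: UP.
- exact: sp_path.
- exact: ps.
- exact: sp_uniq.
- exact: us.
- by rewrite sp_last ls.
Qed.

Lemma sp_pp p : sp p p = [::].
Proof. by apply: sp_eq; rewrite /isp /= eqxx. Qed.

Lemma sp_cons p q x s : sp p q = x :: s -> sp x q = s.
Proof.
move=> h; apply: sp_eq; have := spP p q; rewrite h /isp /=.
by case/and3P=> /andP[_ ->] -> /andP[_ ->].
Qed.

Lemma walk_len_nil p : walk_len len p [::] = 0.
Proof. by rewrite /walk_len big_ord0. Qed.

Lemma walk_len_cons p x s :
  walk_len len p (x :: s) = len [set p; x] + walk_len len x s.
Proof.
rewrite /walk_len big_ord_recl /=; congr (_ + _).
apply: eq_bigr => i _; rewrite add0n.
have hi : (i < size s)%N := ltn_ord i.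
by rewrite [nth p s i](set_nth_default x) // [nth p (x :: s) i](set_nth_default x) //= ltnW.
Qed.

Definition D p q := walk_len len p (sp p q).

Lemma D_pp p : D p p = 0.
Proof. by rewrite /D sp_pp walk_len_nil. Qed.

Lemma edge_sp a b q : adj a b ->
  sp a q = b :: sp b q \/ sp b q = a :: sp a q.
Proof.
move=> hab.
have [aQ|anQ] := boolP (a \in sp b q).
  have hp := sp_path b q; have hu := sp_uniq b q; have hl := sp_last b q.
  move: aQ hp hu hl; case/splitPr => Q1 Q2.
  case: Q1 => [|z Q1] hp hu hl.
    right; congr (_ :: _); symmetry; apply: sp_eq.
    rewrite /isp; move: hp hu hl => /= /andP[_ ->] /andP[_ ->] ->; by rewrite eqxx.
  exfalso; have := htree.2 b (rcons (z :: Q1) a).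
  have hu' : uniq (b :: (z :: Q1) ++ a :: Q2) := hu.
  have -> : uniq (b :: rcons (z :: Q1) a).
    by move: hu'; rewrite -cat_rcons -cat_cons cat_uniq; case/andP.
  rewrite size_rcons /= ltnS ltnS => /(_ isT isT); apply/negP/negPn.
  rewrite /= rcons_path; move: hp; rewrite -cat_rcons cat_path => /andP[].
  by rewrite /= => /andP[-> ->] _; rewrite last_rcons hab.
left; apply: sp_eq; rewrite /isp /= hab sp_path sp_last eqxx /=.
have := sp_uniq b q; rewrite /= => /andP[-> ->]; rewrite andbT inE negb_or anQ.
by case/andP: hab => ->.
Qed.

Lemma edge_D a b q : adj a b ->
  D a q = len [set a; b] + D b q \/ D b q = len [set a; b] + D a q.
Proof.
move=> hab; rewrite /D; case: (edge_sp q hab) => ->; rewrite walk_len_cons.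
  by left.
by right; rewrite setUC.
Qed.


Fixpoint pedges (p : T) (s : seq T) : seq {set T} :=
  if s is x :: s' then [set p; x] :: pedges x s' else [::].

Lemma wl_pedges p s : walk_len len p s = \sum_(e <- pedges p s) len e.
Proof.
elim: s p => [|x s IH] p; first by rewrite walk_len_nil big_nil.
by rewrite walk_len_cons big_cons IH.
Qed.

Lemma pedges_sub p s e y : e \in pedges p s -> y \in e -> y \in p :: s.
Proof.
elim: s p e => [|x s IH] p e //=; rewrite inE => /orP[/eqP -> | /IH h].
  by rewrite !inE => /orP[->|->]; rewrite ?orbT.
by move=> /h yx; rewrite inE yx orbT.
Qed.

Lemma pedges_uniq p s : uniq (p :: s) -> uniq (pedges p s).
Proof.
elim: s p => [|x s IH] p //= /andP[pn /andP[xn us]].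
rewrite IH /= ?xn ?us // andbT; apply/negP => /(@pedges_sub x s _ p).
rewrite !inE eqxx /= => /(_ isT) h.
by move: pn; rewrite inE h.
Qed.

Lemma pedges_E p s e : path adj p s -> e \in pedges p s -> e \in E.
Proof.
elim: s p => [|x s IH] p //= /andP[/andP[_ hx] ps]; rewrite inE.
by case/orP=> [/eqP ->|/IH]; [|apply].
Qed.

Lemma D_le_total p q : D p q <= total_length E len.
Proof.
rewrite /D wl_pedges big_uniq; last by apply: pedges_uniq; exact: sp_uniq.
rewrite /total_length [\sum_(f in E) _](bigID (fun e => e \in pedges p (sp p q))) /=.
rewrite -[X in X <= _]addr0; apply: lerD.
  rewrite (eq_bigl (fun e => (e \in E) && (e \in pedges p (sp p q)))) //.
  move=> e; case h: (e \in pedges p (sp p q)); rewrite ?andbF //.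
  by rewrite (pedges_E (sp_path p q) h).
by apply: sumr_ge0 => e /andP[/hlen /ltW].
Qed.

Lemma D_le_walk p s : path adj p s -> D p (last p s) <= walk_len len p s.
Proof.
elim: s p => [|x s IH] p /=; first by rewrite D_pp walk_len_nil.
case/andP=> hpx ps; rewrite walk_len_cons.
have hl := adj_len hpx.
apply: (@le_trans _ _ (len [set p; x] + D x (last x s))); last by rewrite lerD2l IH.
case: (edge_D (last x s) hpx) => -> //.
by rewrite addrA lerDr addr_ge0 // ltW.
Qed.


Lemma bigmin_le (I : eqType) (r : seq I) (P : pred I) (F : I -> R) x i0 :
  i0 \in r -> P i0 -> \big[Num.min/x]_(i <- r | P i) F i <= F i0.
Proof.
elim: r => [//|i r IH]; rewrite inE => /orP[/eqP <-|ir] hP.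
  by rewrite big_cons hP ge_min lexx.
rewrite big_cons; case: (P i); last exact: IH.
by rewrite ge_min IH ?orbT.
Qed.

Lemma dist_D p q : dist E len p q = D p q.
Proof.
apply/eqP; rewrite eq_le; apply/andP; split.
  have hk : (size (sp p q) < #|T|)%N.
    have := sp_uniq p q; move/card_uniqP => h.
    by have := max_card (mem (p :: sp p q)); rewrite h.
  apply: le_trans (bigmin_le _ _ (mem_index_enum (Ordinal hk)) isT) _.
  have hw : walk E p q (in_tuple (sp p q)).
    by rewrite /walk /= sp_path sp_last eqxx.
  exact: (bigmin_le _ _ (mem_index_enum (in_tuple (sp p q))) hw).
rewrite /dist; apply: (big_ind (fun y => D p q <= y)).
- exact: D_le_total.
- by move=> a b ha hb; rewrite le_min ha hb.
move=> k _; apply: (big_ind (fun y => D p q <= y)).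
- exact: D_le_total.
- by move=> a b ha hb; rewrite le_min ha hb.
move=> t /andP[pt /eqP <-]; exact: D_le_walk.
Qed.

Lemma walk_len_rcons x p y :
  walk_len len x (rcons p y) = walk_len len x p + len [set last x p; y].
Proof.
elim: p x => [|z p IH] x /=; first by rewrite walk_len_cons !walk_len_nil addr0 add0r.
by rewrite !walk_len_cons IH addrA.
Qed.

Lemma last_rev (z : T) s : last z (rev s) = head z s.
Proof. by case: s => //= x s; rewrite rev_cons last_rcons. Qed.

Lemma head_belast (x : T) s : head (last x s) (belast x s) = x.
Proof. by case: s. Qed.

Lemma walk_len_rev x p :
  walk_len len (last x p) (rev (belast x p)) = walk_len len x p.
Proof.
elim: p x => [|y p IH] x /=; first by rewrite !walk_len_nil.
rewrite rev_cons walk_len_rcons IH last_rev head_belast walk_len_cons.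
by rewrite addrC setUC.
Qed.

Lemma D_sym p q : D q p = D p q.
Proof.
have h := walk_len_rev p (sp p q); rewrite sp_last in h.
rewrite /D -h; congr (walk_len _ _ _); apply: sp_eq.
have hq := sp_last p q; have hp := sp_path p q; have hu := sp_uniq p q.
move: hq hp hu; set s := sp p q => hq hp hu.
rewrite /isp; apply/and3P; split.
- rewrite -hq rev_path; rewrite (eq_path (e' := adj)) //.
  by move=> a b /=; rewrite adjC.
- by rewrite -hq last_rev head_belast.
- by rewrite -hq -rev_rcons -lastI rev_uniq.
Qed.


Notation L := (laplacian E len).

Lemma swap_sum (g : T -> T -> R) :
  \sum_u \sum_(w | adj u w) g u w = \sum_u \sum_(w | adj u w) g w u.
Proof.
rewrite (exchange_big_dep xpredT) //=; apply: eq_bigr => u _.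
by apply: eq_bigl => w; rewrite adjC.
Qed.

Lemma lap_sum0 f : \sum_u L f u = 0.
Proof.
have e : \sum_u L f u = \sum_u \sum_(w | adj u w) (f u - f w) / len [set u; w] by [].
have h1 : \sum_u L f u = \sum_u \sum_(w | adj u w) (f w - f u) / len [set w; u].
  by rewrite e swap_sum.
have h : \sum_u L f u = - \sum_u L f u.
  rewrite {1}h1 e -sumrN; apply: eq_bigr => u _.
  rewrite -sumrN; apply: eq_bigr => w _.
  by rewrite setUC -mulNr opprB.
have : (\sum_u L f u) *+ 2 = 0 by rewrite mulr2n {1}h addNr.
by move/eqP; rewrite mulrn_eq0 /= => /eqP.
Qed.

Lemma energy f : (\sum_u f u * L f u) *+ 2 =
  \sum_u \sum_(w | adj u w) (f u - f w) ^+ 2 / len [set u; w].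
Proof.
have h : \sum_u f u * L f u =
    \sum_u \sum_(w | adj u w) f u * (f u - f w) / len [set u; w].
  apply: eq_bigr => u _; rewrite /laplacian mulr_sumr; apply: eq_bigr => w _.
  by rewrite mulrA.
rewrite mulr2n h {1}swap_sum -big_split /=; apply: eq_bigr => u _.
rewrite -big_split /=; apply: eq_bigr => w _; rewrite setUC -mulrDl; congr (_ / _).
ring.
Qed.

Lemma lapB2 a b u : L (fun u => (a u - b u) / 2) u = (L a u - L b u) / 2.
Proof.
rewrite /laplacian -sumrB mulr_suml; apply: eq_bigr => w _; ring.
Qed.

Lemma lapB a b u : L (fun u => a u - b u) u = L a u - L b u.
Proof.
rewrite /laplacian -sumrB; apply: eq_bigr => w _; ring.
Qed.


Lemma valenceE u : (valence E u)%:R = \sum_(w | adj u w) (1 : R).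
Proof.
rewrite /valence -sum1_card natr_sum; apply: eq_bigl => w; by rewrite inE.
Qed.

Lemma lapD q u : L (fun v => D v q) u = 2 * (u != q)%:R - (valence E u)%:R.
Proof.
have ht : forall w, adj u w -> (D u q - D w q) / len [set u; w] =
    2 * (sp u q == w :: sp w q)%:R - 1.
  move=> w huw; have l0 : len [set u; w] != 0 by rewrite gt_eqF // adj_len.
  case: (edge_sp q huw) => h.
    by rewrite /D h walk_len_cons eqxx addrK divff // /= mulr1; lra.
  have -> : (sp u q == w :: sp w q) = false.
    rewrite h; apply/eqP => e; have := congr1 size e => /=.
    by move/eqP; rewrite -[X in X == _]addn0 -addn2 eqn_add2l.
  rewrite /D h walk_len_cons setUC opprD addrCA subrr addr0 mulNr divff //.
  by rewrite /= mulr0 sub0r.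
rewrite /laplacian (eq_bigr _ ht) sumrB -mulr_sumr valenceE; congr (2 * _ - _).
have [<-|uq] := eqP.
  rewrite /= big1 // => w _; by rewrite sp_pp.
have : sp u q != [::].
  by apply/eqP => e; apply: uq; rewrite -(sp_last u q) e.
case e: (sp u q) => [//|h s] _.
have huh : adj u h by have := sp_path u q; rewrite e /= => /andP[].
rewrite (bigD1 h) //= (sp_cons e) eqxx big1 ?addr0 // => w /andP[_ wh].
case: eqP => // -[] /eqP; by rewrite eq_sym (negbTE wh).
Qed.


Lemma count_edges (F : {set T} -> R) :
  \sum_u \sum_(w | adj u w) F [set u; w] = (\sum_(e in E) F e) *+ 2.
Proof.
rewrite pair_big_dep /= (partition_big (fun uw : T * T => [set uw.1; uw.2]) (mem E)) /=;
  last by move=> i /andP[].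
rewrite -sumrMnl; apply: eq_bigr => e eE.
rewrite (eq_bigr (fun _ => F e)); last by move=> uw /andP[_ /eqP ->].
rewrite sumr_const; congr (_ *+ _).
have /cards2P[a [b [ab he]]] : #|e| == 2%N by rewrite hE2.
subst e.
have hab2 : (a, b) != (b, a) by rewrite xpair_eqE negb_and ab.
transitivity #|[set (a, b); (b, a)]|; last by rewrite cards2 hab2.
apply: eq_card => -[u w]; rewrite !inE /=; apply/idP/idP.
  case/andP=> huw /eqP hs.
  have hu : u \in [set a; b] by rewrite -hs set21.
  have hw : w \in [set a; b] by rewrite -hs set22.
  move: hu hw huw; rewrite !inE => /orP[]/eqP-> /orP[]/eqP->;
    rewrite ?adj_irr ?eqxx ?orbT //.
case/orP=> /eqP[-> ->]; rewrite unfold_in /=.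
  by rewrite eqxx andbT /Defs.adj ab eE.
by rewrite adjC setUC eqxx andbT /Defs.adj ab eE.
Qed.


Lemma energy_D q : \sum_u D u q * L (fun v => D v q) u = total_length E len.
Proof.
have h := energy (fun v => D v q); simpl in h.
have e2 : \sum_u \sum_(w | adj u w) (D u q - D w q) ^+ 2 / len [set u; w] =
    \sum_u \sum_(w | adj u w) len [set u; w].
  2: by rewrite e2 count_edges !mulr2n in h; rewrite /total_length; lra.
apply: eq_bigr => u _; apply: eq_bigr => w huw.
have l0 : len [set u; w] != 0 by rewrite gt_eqF // adj_len.
case: (edge_D q huw) => ->; first by rewrite addrK expr2 mulfK.
by rewrite opprD addrCA subrr addr0 sqrrN expr2 mulfK.
Qed.

Lemma res_D p q : resistance E len p q = D p q.
Proof.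
pose x0 := fun u => (D u q - D u p) / 2.
have hx0 : forall u, L x0 u = (u == p)%:R - (u == q)%:R.
  move=> u; rewrite lapB2 !lapD.
  by case: (u == p); case: (u == q) => /=; lra.
have ex : exists x : T -> R, forall u, L x u = (u == p)%:R - (u == q)%:R
  by exists x0.
have := epsilon_spec (inhabits (fun _ : T => 0 : R)) _ ex.
rewrite /resistance; set y := epsilon _ _ => hy.
pose z := fun u => y u - x0 u.
have hz : forall u, L z u = 0 by move=> u; rewrite lapB hy hx0 subrr.
have en : \sum_u \sum_(w | adj u w) (z u - z w) ^+ 2 / len [set u; w] = 0.
  by rewrite -energy big1 ?mul0rn // => u _; rewrite hz mulr0.
have zeq : forall u w, adj u w -> z u = z w.
  move=> u w huw.
  have ge0 : forall u w, adj u w -> 0 <= (z u - z w) ^+ 2 / len [set u; w].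
    by move=> a b hab; rewrite divr_ge0 ?sqr_ge0 // ltW // adj_len.
  have := psumr_eq0P (P := xpredT) _ en (i := u) isT.
  move=> /(_ (fun a _ => sumr_ge0 _ (fun b hb => ge0 a b hb))).
  move=> hu; have := psumr_eq0P (ge0 u) hu huw; move/eqP.
  rewrite mulf_eq0 invr_eq0 (gt_eqF (adj_len huw)) orbF sqrf_eq0 subr_eq0.
  by move/eqP.
have zpq : z p = z q.
  have zc : forall b s, path adj b s -> z b = z (last b s).
    move=> b s; elim: s b => [//|a s IH] b /= /andP[hba ps].
    by rewrite (zeq _ _ hba) IH.
  have /connectP[s ps ->] := htree.1 p q.
  exact: zc.
have : y p - y q = z p - z q + (x0 p - x0 q) by rewrite /z; ring.
rewrite zpq subrr add0r => ->; rewrite /x0 !D_pp (D_sym q p); lra.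
Qed.


Lemma sum_deg_D q :
  \sum_u (valence E u)%:R * D u q = 2 * \sum_u D u q - total_length E len.
Proof.
have h := energy_D q.
rewrite (eq_bigr (fun u => 2 * D u q - (valence E u)%:R * D u q)) in h; last first.
  move=> u _; rewrite lapD; case: eqP => [->|_]; rewrite ?D_pp /=; ring.
rewrite sumrB -mulr_sumr in h; lra.
Qed.

Lemma main1 : wiener E len = (#|T|%:R * total_length E len +
   \sum_p \sum_q (valence E q)%:R * resistance E len p q) / 4.
Proof.
have hS : \sum_p \sum_q (valence E q)%:R * resistance E len p q =
    2 * \sum_p \sum_q D p q - #|T|%:R * total_length E len.
  rewrite (eq_bigr (fun p => 2 * \sum_q D q p - total_length E len)); last first.
    move=> p _; rewrite -sum_deg_D; apply: eq_bigr => q _; by rewrite res_D D_sym.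
  rewrite sumrB -mulr_sumr sumr_const exchange_big; congr (_ - _).
  by rewrite mulr_natl.
have hW : wiener E len = (\sum_p \sum_q D p q) / 2.
  rewrite /wiener; congr (_ / _); apply: eq_bigr => p _; apply: eq_bigr => q _.
  exact: dist_D.
rewrite hW hS; lra.
Qed.

Lemma card_E_R (q : T) : \sum_(e in E) (1 : R) = #|T|%:R - 1.
Proof.
have h := lap_sum0 (fun v => D v q).
rewrite (eq_bigr _ (fun u _ => lapD q u)) sumrB -mulr_sumr in h.
have h1 : \sum_u ((u != q)%:R : R) = #|T|%:R - 1.
  have : \sum_u ((u != q)%:R : R) + \sum_u ((u == q)%:R : R) = #|T|%:R.
    rewrite -big_split /= (eq_bigr (fun _ => 1)); last first.
      by move=> u _; case: (u == q); rewrite /= ?add0r ?addr0.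
    by rewrite -sum1_card natr_sum.
  have hq1 : \sum_u ((u == q)%:R : R) = 1.
    rewrite (bigD1 q) //= eqxx big1 ?addr0 //.
    by move=> u /negbTE ->.
  by rewrite hq1 => hh; lra.
have h2 : \sum_u ((valence E u)%:R : R) = (\sum_(e in E) (1 : R)) *+ 2.
  rewrite -(count_edges (fun _ => 1)); apply: eq_bigr => u _; exact: valenceE.
rewrite h1 h2 mulr2n in h; lra.
Qed.

End Tree.

Theorem theorem4p2 (R : realFieldType) (T : finType) (E : {set {set T}})
    (len : {set T} -> R)
    (hV : (0 < #|T|)%N)
    (hE2 : forall f, f \in E -> #|f| = 2)
    (hlen : forall f, f \in E -> 0 < len f)
    (htree : is_tree E) :
  wiener E len =
    (#|T|%:R * total_length E len
     + \sum_(p : T) \sum_(q : T) (valence E q)%:R * resistance E len p q) / 4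
  /\
  ((forall f, f \in E -> len f = 1) ->
   wiener E len =
    (#|T|%:R * (#|T|%:R - 1)
     + \sum_(p : T) \sum_(q : T) (valence E q)%:R * resistance E len p q) / 4).
Proof.
have m1 := main1 hE2 hlen htree.
split => // h1.
have /card_gt0P[q _] := hV.
have hl : total_length E len = #|T|%:R - 1.
  rewrite -(card_E_R hE2 hlen htree q) /total_length.
  by apply: eq_bigr => e /h1.
by rewrite m1 hl.
Qed.
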